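(* Let $(T,D)$ be a predominated tree. Staller wins the MBD game on $(T,D)$ if and only if $T$ contains a substructure $F\in\mathcal S$ such that $X(F)\cap D=\emptyset$.
   Context: A predominated graph is a pair $(G,D)$ with $G$ a finite simple graph and $D\subseteq V(G)$. In the MBD game on $(G,D)$, Staller and Dominator alternately claim unclaimed vertices of $V(G)$ (including vertices of $D$), Staller first, until all vertices are claimed; Staller wins if she claims all of $N_G[v]$ for some $v\in V(G)\setminus D$, and Dominator wins otherwise. For a tree $T$, $S(T)$ is obtained by subdividing each edge of $T$ exactly once; $\mathcal S=\{S(T):T\text{ a tree}\}$ and $X(S(T))=V(T)$ (with $S(P_1)=P_1$, $X(P_1)=V(P_1)$). $F\in\mathcal S$ is a substructure in $G$ if $F$ is a subgraph of $G$ and $\deg_G(v)=\deg_F(v)$ for every $v\in X(F)$. *)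

(* Defs.v *)
From HB Require Import structures.
From mathcomp Require Import all_boot.
Set Implicit Arguments. Unset Strict Implicit. Unset Printing Implicit Defensive.

Definition simple_graph (V : finType) (e : rel V) : Prop :=
  symmetric e /\ irreflexive e.

Definition connected_graph (V : finType) (e : rel V) : Prop :=
  forall x y : V, connect e x y.

Definition acyclic_graph (V : finType) (e : rel V) : Prop :=
  forall p : seq V, uniq p -> 3 <= size p -> ~~ cycle e p.

Definition is_tree (V : finType) (e : rel V) : Prop :=
  [/\ simple_graph e, 0 < #|V|, connected_graph e & acyclic_graph e].

Definition cnbhd (V : finType) (e : rel V) (v : V) : {set V} :=
  [set u | (u == v) || e v u].

Definition deg (V : finType) (e : rel V) (v : V) : nat := #|[set u | e v u]|.

Definition staller_won (V : finType) (e : rel V) (D S : {set V}) : bool :=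
  [exists v, (v \notin D) && (cnbhd e v \subset S)].

(* staller_wins_from n S Dm sturn: Staller has a winning strategy from the
   position where Staller owns S, Dominator owns Dm, and it is Staller's turn
   iff sturn; n is fuel (number of remaining moves is at most #|V|). *)
Fixpoint staller_wins_from (V : finType) (e : rel V) (D : {set V}) (n : nat)
    (S Dm : {set V}) (sturn : bool) : bool :=
  let U := ~: (S :|: Dm) in
  match n with
  | 0 => staller_won e D S
  | n'.+1 =>
      if U == set0 then staller_won e D S
      else if sturn then
        [exists x in U, staller_wins_from e D n' (x |: S) Dm false]
      else
        [forall x in U, staller_wins_from e D n' S (x |: Dm) true]
  end.

Definition staller_wins_MBD (V : finType) (e : rel V) (D : {set V}) : bool :=
  staller_wins_from e D #|V| set0 set0 true.

(* edges of (A, r), each unordered edge represented once *)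
Definition sub_edge (A : finType) (r : rel A) : predArgType :=
  {p : A * A | r p.1 p.2 && (enum_rank p.1 < enum_rank p.2)}.

(* S(A): vertices V(A) (inl) plus one subdivision vertex per edge (inr);
   X(S(A)) = the inl vertices. *)
Definition sdiv_rel (A : finType) (r : rel A) : rel (A + sub_edge r) :=
  fun x y =>
    match x, y with
    | inl a, inr p => (a == (val p).1) || (a == (val p).2)
    | inr p, inl a => (a == (val p).1) || (a == (val p).2)
    | _, _ => false
    end.

(* h : V(S(A)) -> V(G) embeds F = S(A) (A a tree) as a subgraph of G
   (injective, adjacency-preserving), and it is a substructure: each
   X-vertex has the same degree in G as in F. *)
Definition S_substructure (V : finType) (e : rel V) (A : finType) (r : rel A)
    (h : A + sub_edge r -> V) : Prop :=
  [/\ is_tree r, injective h,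
      (forall x y, @sdiv_rel A r x y -> e (h x) (h y)) &
      (forall a : A, deg e (h (inl a)) = deg (@sdiv_rel A r) (inl a))].

(* Main.v *)
Require Import Defs.
From HB Require Import structures.
From mathcomp Require Import all_boot.
Set Implicit Arguments. Unset Strict Implicit. Unset Printing Implicit Defensive.

Section L0.
Variables (T : finType) (r : rel T).
Hypotheses (rsym : symmetric r) (rirr : irreflexive r) (racyc : acyclic_graph r).

Lemma L0 (R : {set T}) : R != set0 ->
  exists2 x, x \in R & #|[set u in R | r x u]| <= 1.
Proof.
move=> R0.
case: (boolP [exists x in R, #|[set u in R | r x u]| <= 1]).
  by case/exists_inP=> x xR H; exists x.
move=> /exists_inPn H.
have H2 : forall x, x \in R -> 1 < #|[set u in R | r x u]|.
  by move=> x /H; rewrite -ltnNge.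
suff: forall k, exists l rest, [/\ uniq (l :: rest), all (mem R) (l :: rest),
     size rest = k & path r l rest].
  move=> /(_ #|T|) [l [rest [U _ S _]]].
  have := card_uniqP U; rewrite /= S => Hc.
  by have := max_card (mem (l :: rest)); rewrite Hc ltnn.
elim=> [|k [l [rest [U A S P]]]].
  case/set0Pn: R0 => x xR; exists x, [::]; split => //=; by rewrite xR.
have lR : l \in R by move: A => /= /andP[].
have [w [wR lw wpl]] : exists w, [/\ w \in R, r l w &
    (if rest is pl :: _ then w != pl else true)].
  have := H2 l lR; case/card_gt1P => w1 [w2 [w1in w2in w12]].
  move: w1in w2in; rewrite !inE => /andP[w1R lw1] /andP[w2R lw2].
  case: rest {U A S P} => [|pl rest'].
    by exists w1.
  case: (eqVneq w1 pl) => [e1|n1]; last by exists w1.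
  exists w2; split => //; by rewrite -e1 eq_sym.
case: (boolP (w \in l :: rest)) => win; last first.
  exists w, (l :: rest); split => //=.
  - by rewrite win.
  - by rewrite wR.
  - by rewrite S.
  - by rewrite rsym lw.
exfalso.
move: win; rewrite inE => /orP[/eqP wl|wrest].
  by move: lw; rewrite wl rirr.
case: rest wrest wpl U P {A S} => [//|pl rest'] wrest wpl U P.
move: wrest; rewrite inE (negbTE wpl) /= => wr'.
case/splitPr: wr' U P => p1 p2 U P.
apply: (negP (racyc (p := l :: rcons (pl :: p1) w) _ _)).
- have E : l :: pl :: p1 ++ w :: p2 = rcons (l :: pl :: p1) w ++ p2.
    by rewrite -cats1 -catA.
  by move: U; rewrite E cat_uniq => /andP[].
- by rewrite /= size_rcons.
- rewrite /cycle rcons_path rcons_path.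
  move: P; rewrite -cat_cons cat_path => /andP[P1 P2].
  rewrite P1 /=; move: P2 => /= /andP[-> _] /=.
  by rewrite last_rcons rsym lw.
Qed.
End L0.

Lemma next_neq_prev (T : eqType) (p : seq T) x :
  uniq p -> 3 <= size p -> x \in p -> next p x != prev p x.
Proof.
move=> U S xp; case: (rot_to xp) => i s' E.
have U' : uniq (x :: s') by rewrite -E rot_uniq.
have S' : 3 <= size (x :: s') by rewrite -E size_rot.
rewrite -(next_rot i U) -(prev_rot i U) E.
apply/eqP => Heq.
have H1 : next (x :: s') (next (x :: s') x) = x.
  by rewrite {1}Heq next_prev.
move: H1 U' S'; clear.
case: s' => [|a [|b s'']] // H1 U' _.
move: H1; rewrite [next _ x]next_nth mem_head /= eqxx /=.
move: U' => /= /andP[]; rewrite !inE !negb_or => /andP[xa /andP[xb _]] _.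
rewrite eq_sym (negbTE xa) /= eqxx /= => E.
by move: xb; rewrite E eqxx.
Qed.

Lemma L0_acyclic (T : finType) (r : rel T) : symmetric r ->
  (forall R : {set T}, R != set0 -> exists2 x, x \in R & #|[set u in R | r x u]| <= 1) ->
  acyclic_graph r.
Proof.
move=> rsym HL p U S; apply/negP => C.
have p0 : [set x in p] != set0.
  by case: p S {U C} => [|a p] // _; apply/set0Pn; exists a; rewrite inE mem_head.
case: (HL _ p0) => x; rewrite inE => xp.
apply/negP; rewrite -ltnNge; apply/card_gt1P.
exists (next p x), (prev p x); split.
- by rewrite !inE mem_next xp next_cycle.
- by rewrite !inE mem_prev xp rsym prev_cycle.
- exact: next_neq_prev.
Qed.

Section Game.
Variables (V : finType) (e : rel V) (D : {set V}).

Lemma claimU (S Dm : {set V}) x : ~: ((x |: S) :|: Dm) = ~: (S :|: Dm) :\ x.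
Proof. by apply/setP => y; rewrite !inE; case: (y == x); rewrite ?andbF ?andbT. Qed.
Lemma claimU' (S Dm : {set V}) x : ~: (S :|: (x |: Dm)) = ~: (S :|: Dm) :\ x.
Proof. by apply/setP => y; rewrite !inE; case: (y == x); rewrite ?orbT ?andbF ?andbT. Qed.

Lemma won_stays n (S Dm : {set V}) st :
  staller_won e D S -> staller_wins_from e D n S Dm st.
Proof.
elim: n S Dm st => [//|n IH] S Dm st Hw /=.
case: ifP => // /set0Pn [x xU].
case: st.
  apply/exists_inP; exists x => //; apply: IH.
  case/existsP: Hw => v /andP[vD sub]; apply/existsP; exists v.
  by rewrite vD /= (subset_trans sub) // subsetUr.
by apply/forall_inP => y _; apply: IH.
Qed.

Definition matching (W : {set V}) (p : V -> V) :=
  [/\ forall a, p (p a) = a, forall a, p a != a -> (a \in W) && e a (p a)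
    & forall v, v \in W -> v \notin D -> p v != v].

Section G1.
Variable p : V -> V.
Hypothesis Hp : matching setT p.

Lemma nopair_nowin (S : {set V}) :
  (forall a, a \in S -> p a != a -> p a \notin S) -> ~~ staller_won e D S.
Proof.
case: Hp => inv edge sat NP; apply/existsP => [[v /andP[vD sub]]].
have pv := sat v (in_setT v) vD.
have vS : v \in S by apply: (subsetP sub); rewrite inE eqxx.
have pvS : p v \in S.
  apply: (subsetP sub); rewrite inE; case/andP: (edge v pv) => _ ->; by rewrite orbT.
by move: (NP v vS pv); rewrite pvS.
Qed.

Definition Ginv (S Dm : {set V}) :=
  (forall a, a \in S -> a \notin Dm) /\ (forall a, a \in S -> p a != a -> p a \in Dm).

Lemma G1_main n : (forall S Dm, Ginv S Dm -> ~~ staller_wins_from e D n S Dm true) /\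
  (forall S Dm x, Ginv S Dm -> x \notin S -> x \notin Dm ->
     ~~ staller_wins_from e D n (x |: S) Dm false).
Proof.
case: Hp => inv edge sat.
have NP1 : forall S Dm, Ginv S Dm -> (forall a, a \in S -> p a != a -> p a \notin S).
  move=> S Dm [dis H] a aS pa; apply/negP => paS.
  by move: (H a aS pa) (dis _ paS) => ->.
have NP2 : forall S Dm x, Ginv S Dm -> x \notin S -> x \notin Dm ->
   (forall a, a \in x |: S -> p a != a -> p a \notin x |: S).
  move=> S Dm x [dis H] xS xD a; rewrite !inE => /orP[/eqP ->|aS] pa.
    apply/negP => /orP[/eqP E|pxS]; first by rewrite E eqxx in pa.
    have := H _ pxS; rewrite inv eq_sym => /(_ pa); by rewrite (negbTE xD).
  have paD := H a aS pa; rewrite negb_or; apply/andP; split.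
    by apply/negP => /eqP E; move: xD; rewrite -E paD.
  by apply/negP => paS; move: (dis _ paS); rewrite paD.
elim: n => [|n [IH1 IH2]]; split.
- by move=> S Dm G; apply: nopair_nowin; apply: NP1 G.
- by move=> S Dm x G xS xD; apply: nopair_nowin; apply: NP2 G xS xD.
- move=> S Dm G /=; case: ifP => [_|_]; first by apply: nopair_nowin; apply: NP1 G.
  apply/exists_inP => [[x]]; rewrite !inE negb_or => /andP[xS xD].
  by apply/negP; apply: IH2.
- move=> S Dm x G xS xD /=; case: ifP => [_|/negbT /set0Pn [y yU]].
    by apply: nopair_nowin; apply: NP2 G xS xD.
  set U := ~: (x |: S :|: Dm).
  pose u := if (p x != x) && (p x \in U) then p x else y.
  have uU : u \in U by rewrite /u; case: ifP => // /andP[].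
  apply/forall_inP => /(_ u uU); apply/negP; apply: IH1.
  case: G => dis H; split.
    move=> a aS; move: uU; rewrite !inE !negb_or => /andP[/andP[ua ua'] uD].
    move: aS; rewrite !inE => /orP[/eqP ->|aS].
      by rewrite xD andbT eq_sym.
    rewrite dis // andbT; apply/negP => /eqP E; move: ua'; by rewrite -E aS.
  move=> a; rewrite !inE => /orP[/eqP ->|aS] pa; last by rewrite H ?orbT.
  rewrite /u; case: ifP => [_|]; first by rewrite eqxx.
  rewrite pa /= => pxU.
  move: pxU; rewrite /U !inE !negb_or => /negbT; rewrite !negb_and !negbK.
  case/orP => [/orP[E|pxS]|->]; last by rewrite orbT.
    by rewrite E in pa.
  have := H _ pxS; rewrite inv eq_sym => /(_ pa); by rewrite (negbTE xD).
Qed.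

Lemma G1 : ~~ staller_wins_MBD e D.
Proof.
apply: (proj1 (G1_main _)); split; by move=> a; rewrite inE.
Qed.
End G1.
End Game.

Section Edges.
Variables (A : finType) (r : rel A).
Hypotheses (rsym : symmetric r) (rirr : irreflexive r).

Definition inc (a : A) := [set p : sub_edge r | (a == (val p).1) || (a == (val p).2)].
Definition oth (p : sub_edge r) (a : A) := if (val p).1 == a then (val p).2 else (val p).1.

Lemma oth_r p a : p \in inc a -> r a (oth p a).
Proof.
rewrite inE /oth; case: p => [[x y] /= /andP[rxy _]].
case/orP => /eqP E; subst a; first by rewrite eqxx.
by case: ifP => [/eqP E|]; [subst; rewrite rirr in rxy | rewrite rsym].
Qed.

Lemma oth_neq p a : p \in inc a -> oth p a != a.
Proof. by move/oth_r; apply: contraTneq => ->; rewrite rirr. Qed.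

Lemma edge_uniq p q a : p \in inc a -> q \in inc a -> oth p a = oth q a -> p = q.
Proof.
case: p => [[x y] Pp]; case: q => [[x' y'] Pq].
have /andP[rxy lxy] := Pp; have /andP[rxy' lxy'] := Pq.
rewrite !inE /oth /= => Hp Hq E; apply: val_inj => /=.
move: rxy lxy rxy' lxy' => /= rxy lxy rxy' lxy'.
have nxy : x != y by apply: contraTneq rxy => ->; rewrite rirr.
have nxy' : x' != y' by apply: contraTneq rxy' => ->; rewrite rirr.
move: Hp Hq E; case/orP => /eqP Ha; case/orP => /eqP Hb; subst a; subst => /=.
- by rewrite !eqxx => ->; congr pair.
- rewrite eqxx (negbTE nxy') => Ey; subst.
  by move: (ltn_trans lxy lxy'); rewrite ltnn.
- rewrite eqxx (negbTE nxy) => Ey; subst.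
  by move: (ltn_trans lxy lxy'); rewrite ltnn.
- by rewrite (negbTE nxy) (negbTE nxy') => ->.
Qed.

Lemma edge_ex a b : r a b -> exists2 q, q \in inc a & oth q a = b.
Proof.
move=> rab.
have ab : a != b by apply: contraTneq rab => ->; rewrite rirr.
have rk : enum_rank a != enum_rank b by apply: contra ab => /eqP /enum_rank_inj ->.
case: (ltngtP (enum_rank a) (enum_rank b)) => [lt|gt|/val_inj E]; last by rewrite E eqxx in rk.
- have H : r (a, b).1 (a, b).2 && (enum_rank (a, b).1 < enum_rank (a, b).2) by rewrite /= rab lt.
  exists (exist _ (a, b) H : sub_edge r); first by rewrite inE /= eqxx.
  by rewrite /oth /= eqxx.
- have H : r (b, a).1 (b, a).2 && (enum_rank (b, a).1 < enum_rank (b, a).2) by rewrite /= rsym rab gt.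
  exists (exist _ (b, a) H : sub_edge r); first by rewrite inE /= eqxx orbT.
  by rewrite /oth /= eq_sym (negbTE ab).
Qed.
End Edges.

Section G2.
Variables (V : finType) (e : rel V) (D : {set V}).
Variables (A : finType) (r : rel A) (h : A + sub_edge r -> V).
Hypotheses (rsym : symmetric r) (rirr : irreflexive r) (racyc : acyclic_graph r).
Hypotheses (hinj : injective h) (hadj : forall x y, sdiv_rel x y -> e (h x) (h y))
  (hdeg : forall a : A, deg e (h (inl a)) = deg (@sdiv_rel A r) (inl a))
  (hD : forall a, h (inl a) \notin D).

Let F a := h (inl a).
Let M p := h (inr p).

Lemma Minj : injective M.
Proof. by move=> p q /hinj [->]. Qed.

Lemma nbF a : [set u | e (F a) u] = M @: inc r a.
Proof.
apply/eqP; rewrite eq_sym eqEcard; apply/andP; split.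
  apply/subsetP => u /imsetP [p pin ->]; rewrite inE; apply: hadj; by move: pin; rewrite inE.
rewrite card_imset; last exact: Minj.
have -> : #|[set u | e (F a) u]| = deg e (F a) by [].
rewrite /F hdeg /deg.
have -> : [set z | @sdiv_rel A r (inl a) z] = inr @: inc r a.
  apply/setP => z; rewrite inE; case: z => [b|p] /=.
    by apply/esym/imsetP => [[p _]].
  apply/idP/imsetP => [H|[q qin [->]]]; first by exists p; rewrite ?inE.
  by move: qin; rewrite inE.
by rewrite card_imset //; move=> x y [].
Qed.

Lemma cnbF a : cnbhd e (F a) \subset F a |: (M @: inc r a).
Proof.
apply/subsetP => u; rewrite !inE => /orP[->//|eu]; apply/orP; right.
by rewrite -nbF inE.
Qed.

Let W := staller_wins_from e D.

Lemma Fwin a n (S Dm : {set V}) : F a \in ~: (S :|: Dm) ->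
  #|~: (S :|: Dm)| <= n -> (forall p, p \in inc r a -> M p \in S) -> W n S Dm true.
Proof.
move=> FU Hn HS.
case: n Hn => [|n] Hn.
  by move: Hn; rewrite leqn0 cards_eq0 => /eqP E; rewrite E inE in FU.
rewrite /W /=; case: ifP => [/eqP E|_]; first by rewrite E inE in FU.
apply/exists_inP; exists (F a) => //; apply: won_stays.
apply/existsP; exists (F a); rewrite hD /=.
apply: (subset_trans (cnbF a)); apply/subsetP => u; rewrite !inE => /orP[->//|/imsetP [p pin ->]].
by rewrite HS ?orbT.
Qed.

Definition G2inv (R : {set A}) (S Dm : {set V}) :=
  [/\ forall a, a \in R -> F a \in ~: (S :|: Dm),
      forall p : sub_edge r, (val p).1 \in R -> (val p).2 \in R -> M p \in ~: (S :|: Dm)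
    & forall p : sub_edge r, ((val p).1 \in R) != ((val p).2 \in R) -> M p \in S].

Lemma inc_end p a : p \in inc r a -> ((val p).1 \in [set a]) || ((val p).2 \in [set a]).
Proof. by rewrite !inE => /orP[/eqP->|/eqP->]; rewrite eqxx ?orbT. Qed.

Lemma G2_main k : forall (R : {set A}) (S Dm : {set V}) n, #|R| <= k -> R != set0 ->
  G2inv R S Dm -> #|~: (S :|: Dm)| <= n -> W n S Dm true.
Proof.
elim: k => [|k IH] R S Dm n Rk R0 [I1 I2 I3] Hn.
  by move: Rk R0; rewrite leqn0 cards_eq0 => ->.
have [a aR Ha] := L0 rsym rirr racyc R0.
have endp : forall p, p \in inc r a -> (((val p).1 \in R) != ((val p).2 \in R)) = (oth p a \notin R).
  move=> p; rewrite inE /oth; case/orP => /eqP E; rewrite -E ?eqxx.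
    by rewrite aR.
  case: ifP => [/eqP E'|_]; first by rewrite E' aR.
  by rewrite aR; case: (_ \in R).
case: (set_0Vmem [set u in R | r a u]) => [E|[b]].
  apply: (Fwin (I1 a aR) Hn) => p pin; apply: I3; rewrite endp //.
  apply/negP => oR; have : oth p a \in [set u in R | r a u] by rewrite inE oR oth_r.
  by rewrite E inE.
rewrite inE => /andP[bR rab].
have uniqb : forall c, c \in R -> r a c -> c = b.
  move=> c cR rac; have /card_le1_eqP H := Ha.
  by apply: H; rewrite inE ?cR ?bR.
have [q qin oq] := edge_ex rsym rirr rab.
have qR : ((val q).1 \in R) && ((val q).2 \in R).
  move: qin oq; rewrite inE /oth; case/orP => /eqP E; rewrite -E ?eqxx => Eb.
    by rewrite aR Eb bR.
  by move: Eb; case: ifP => [/eqP -> _|_ ->]; rewrite ?bR ?aR.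
have MqU : M q \in ~: (S :|: Dm) by case/andP: qR => ? ?; apply: I2.
have FaU := I1 a aR.
have MF : M q != F a by apply/eqP => /hinj.
set U := ~: (S :|: Dm) in MqU FaU Hn *.
have U2 : 2 <= #|U|.
  apply/card_gt1P; exists (M q), (F a); split => //.
case: n Hn => [|[|n]] Hn; first by move: (leq_trans U2 Hn).
  by move: (leq_trans U2 Hn).
rewrite /W /=; case: ifP => [/eqP E|_]; first by rewrite /U E inE in MqU.
apply/exists_inP; exists (M q) => //.
rewrite claimU -/U; case: ifP => [/eqP E|_].
  have H : F a \in U :\ M q by rewrite in_setD1 eq_sym MF FaU.
  by rewrite E inE in H.
apply/forall_inP => u; rewrite inE => /andP[uMq uU].
have hn : #|U :\ M q :\ u| <= n.
  by move: Hn; rewrite (cardsD1 (M q)) MqU (cardsD1 u) inE uMq uU.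
case: (eqVneq u (F a)) => [Eu|uF].
- subst u; apply: (IH (R :\ a)).
  + by move: Rk; rewrite (cardsD1 a) aR.
  + apply/set0Pn; exists b; rewrite !inE bR andbT; apply/eqP => E; by rewrite E rirr in rab.
  + split.
    * move=> c; rewrite !inE => /andP[ca cR].
      have := I1 c cR; rewrite !inE !negb_or => /andP[cS cD].
      have n1 : F c != M q by apply/eqP => /hinj.
      have n2 : F c != F a by apply/eqP => /hinj [E]; rewrite E eqxx in ca.
      by rewrite (negbTE n1) (negbTE n2) (negbTE cS) (negbTE cD).
    * move=> p; rewrite !inE => /andP[p1a p1R] /andP[p2a p2R].
      have := I2 p p1R p2R; rewrite !inE !negb_or => /andP[pS pD].
      have n1 : M p != M q.
        apply/eqP => /hinj [E]; subst p.
        by move: qin; rewrite inE eq_sym (negbTE p1a) eq_sym (negbTE p2a).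
      have n2 : M p != F a by apply/eqP => /hinj.
      by rewrite (negbTE n1) (negbTE n2) (negbTE pS) (negbTE pD).
    * move=> p Hp; rewrite inE.
      case: (boolP (p \in inc r a)) => pin.
        have : oth p a \in R :\ a.
          move: pin Hp; rewrite inE /oth => /orP[/eqP E|/eqP E]; rewrite -E.
          - rewrite eqxx [a \in _]in_setD1 eqxx /=; by case: (_ \in R :\ a).
          - case: ifP => [/eqP ->|_]; rewrite [a \in _]in_setD1 eqxx //=.
            by case: (_ \in R :\ a).
        rewrite !inE => /andP[_ oR]; have := uniqb _ oR (oth_r rsym rirr pin).
        by rewrite -oq => /(edge_uniq rirr pin qin) ->; rewrite eqxx.
      rewrite I3 ?orbT //; move: Hp pin; rewrite !inE !negb_or.
      move=> H /andP[n1 n2]; move: H; rewrite eq_sym in n1; rewrite eq_sym in n2.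
      by rewrite n1 n2.
  + by rewrite claimU' claimU -/U.
- apply: (@Fwin a n).
  + rewrite claimU' claimU -/U.
    by rewrite !in_setD1 eq_sym uF eq_sym MF FaU.
  + by rewrite claimU' claimU -/U.
  + move=> p pin; rewrite inE.
    case: (eqVneq p q) => [->|pq]; first by rewrite inE eqxx.
    rewrite I3 ?orbT // endp //; apply/negP => oR.
    by move: pq; rewrite (edge_uniq rirr pin qin) ?eqxx // oq (uniqb _ oR (oth_r rsym rirr pin)).
Qed.
Lemma G2 : 0 < #|A| -> staller_wins_MBD e D.
Proof.
move=> hA; apply: (@G2_main #|A| setT).
- by rewrite cardsT.
- by apply/set0Pn; move: hA; rewrite -cardsT card_gt0 => /set0Pn [x _]; exists x; rewrite inE.
- split; first by move=> a _; rewrite !inE.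
  + by move=> p _ _; rewrite !inE.
  + by move=> p; rewrite !inE.
- by rewrite max_card.
Qed.
End G2.

Section Comb.
Variables (V : finType) (e : rel V).
Hypotheses (esym : symmetric e) (eirr : irreflexive e) (eacyc : acyclic_graph e).

Definition nW (W : {set V}) v := [set u in W | e v u].
Definition rX (X : {set V}) : rel V :=
  fun a b => [&& a \in X, b \in X, a != b & [exists u, e a u && e u b]].

Definition xsub (W D X : {set V}) :=
  [/\ X \subset W :\: D, X != set0,
      (forall x u, x \in X -> u \in W -> e x u ->
          (u \notin X) && (#|[set w in X | e u w]| == 2))
    & (forall a b, a \in X -> b \in X -> connect (rX X) a b)].

Lemma rX_sym (X : {set V}) : symmetric (rX X).
Proof.
move=> a b; rewrite /rX; apply/and4P/and4P => [][? ? ? /existsP[u /andP[h1 h2]]];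
  split => //; rewrite 1?eq_sym //; apply/existsP; exists u; by rewrite esym h2 esym h1.
Qed.

Lemma rX_sub (X Y : {set V}) : X \subset Y -> subrel (rX X) (connect (rX Y)).
Proof.
move=> XY a b /and4P[aX bX ab ex]; apply: connect1.
by rewrite /rX (subsetP XY _ aX) (subsetP XY _ bX) ab ex.
Qed.

Lemma nWE (W : {set V}) v u : (u \in nW W v) = (u \in W) && e v u.
Proof. by rewrite inE. Qed.

Lemma nW_leaf (W : {set V}) x y u : nW W x = [set y] -> u \in W -> e x u -> u = y.
Proof.
move=> E uW xu; have : u \in nW W x by rewrite nWE uW xu.
by rewrite E inE => /eqP.
Qed.

Lemma nW_leafy (W : {set V}) x y : nW W x = [set y] -> (y \in W) && e x y.
Proof. by move=> E; rewrite -nWE E inE. Qed.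

Definition swp (x y : V) (p : V -> V) a := if a == x then y else if a == y then x else p a.

Lemma swap_match (W W' D D' : {set V}) p' x y :
  matching e D' W' p' -> p' x = x -> p' y = y -> x \in W -> y \in W -> e x y ->
  W' \subset W ->
  (forall v, v \in W -> v \notin D -> v != x -> v != y -> (v \in W') && (v \notin D')) ->
  matching e D W (swp x y p').
Proof.
case=> inv edge sat px py xW yW exy WW' Hv.
have xy : x != y by apply: contraTneq exy => ->; rewrite eirr.
have px' : forall a, p' a = x -> a = x by move=> a E; rewrite -(inv a) E px.
have py' : forall a, p' a = y -> a = y by move=> a E; rewrite -(inv a) E py.
split.
- move=> a; rewrite /swp.
  case: (eqVneq a x) => [->|ax]; first by rewrite eq_sym (negbTE xy) eqxx.
  case: (eqVneq a y) => [->|ay]; first by rewrite eqxx.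
  case: (eqVneq (p' a) x) => [/px' E|pax]; first by rewrite E eqxx in ax.
  case: (eqVneq (p' a) y) => [/py' E|pay]; first by rewrite E eqxx in ay.
  by rewrite inv.
- move=> a; rewrite /swp.
  case: (eqVneq a x) => [->|ax]; first by rewrite xW exy.
  case: (eqVneq a y) => [->|ay]; first by rewrite yW esym exy.
  by move=> /edge /andP[aW ->]; rewrite (subsetP WW' _ aW).
- move=> v vW vD; rewrite /swp.
  case: (eqVneq v x) => [->|vx]; first by rewrite eq_sym.
  case: (eqVneq v y) => [->|vy]; first by [].
  by case/andP: (Hv v vW vD vx vy) => ? ?; apply: sat.
Qed.

Lemma liftD_match (W D : {set V}) x y p' :
  x \in W -> x \in D -> nW W x = [set y] ->
  matching e (y |: D) (W :\ x) p' -> exists p, matching e D W p.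
Proof.
move=> xW xD Nx Hp.
have /andP[yW exy] := nW_leafy Nx.
have px : p' x = x.
  case: Hp => _ edge _; apply/eqP; apply: contraT => /edge.
  by rewrite !inE eqxx.
case: (eqVneq (p' y) y) => py.
  exists (swp x y p'); apply: (swap_match Hp) => //; first by apply: subD1set.
  move=> v vW vD vx vy; by rewrite !inE vx vW negb_or vy vD.
exists p'; case: Hp => inv edge sat; split => //.
  by move=> a /edge /andP[aW ->]; move: aW; rewrite inE => /andP[_ ->].
move=> v vW vD; case: (eqVneq v y) => [->//|vy].
apply: sat; first by rewrite in_setD1 vW andbT; apply: contraNneq vD => ->.
by rewrite !inE negb_or vy.
Qed.

Lemma liftD_sub (W D : {set V}) x y X' :
  nW W x = [set y] -> xsub (W :\ x) (y |: D) X' -> xsub W D X'.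
Proof.
move=> Nx [sub ne H3 H4]; split => //.
  apply: (subset_trans sub); apply/subsetP => v; rewrite !inE.
  by rewrite negb_or => /and3P[/andP[_ ->] _ ->].
move=> a u aX uW au.
case: (eqVneq u x) => [Eu|ux].
  subst u; have aW : a \in W.
    by move: (subsetP sub _ aX); rewrite in_setD in_setD1 => /andP[_ /andP[_ ->]].
  have ay : a = y by apply: (nW_leaf Nx aW); rewrite esym.
  by move: (subsetP sub _ aX); rewrite ay !inE eqxx.
by apply: (H3 a) => //; rewrite in_setD1 ux uW.
Qed.
Lemma single_sub (W D : {set V}) v : v \in W -> v \notin D -> nW W v = set0 ->
  xsub W D [set v].
Proof.
move=> vW vD N0; split.
- by apply/subsetP => u; rewrite !inE => /eqP ->; rewrite vW vD.
- by apply/set0Pn; exists v; rewrite inE.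
- move=> x u; rewrite inE => /eqP -> uW vu.
  have : u \in nW W v by rewrite nWE uW vu.
  by move=> H; rewrite N0 inE in H.
- by move=> a b; rewrite !inE => /eqP -> /eqP ->; apply: connect0.
Qed.
Lemma pair_sub (W D : {set V}) x1 x2 y : x1 != x2 ->
  x1 \in W -> x2 \in W -> x1 \notin D -> x2 \notin D ->
  nW W x1 = [set y] -> nW W x2 = [set y] -> xsub W D [set x1; x2].
Proof.
move=> x12 x1W x2W x1D x2D N1 N2.
have /andP[yW e1] := nW_leafy N1.
have /andP[_ e2] := nW_leafy N2.
have y1 : y != x1 by apply: contraTneq e1 => ->; rewrite eirr.
have y2 : y != x2 by apply: contraTneq e2 => ->; rewrite eirr.
have r12 : rX [set x1; x2] x1 x2.
  rewrite /rX !inE !eqxx ?orbT x12 /=; apply/existsP; exists y; by rewrite e1 esym e2.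
split.
- by apply/subsetP => u; rewrite !inE => /orP[] /eqP ->; rewrite ?x1W ?x2W ?x1D ?x2D.
- by apply/set0Pn; exists x1; rewrite !inE eqxx.
- move=> x u; rewrite !inE => /orP[] /eqP -> uW xu.
  + rewrite (nW_leaf N1 uW xu) (negbTE y1) (negbTE y2) /=.
    have -> : [set w in [set x1; x2] | e y w] = [set x1; x2].
      apply/setP => w; rewrite !inE; apply/andP/idP => [[]//|H]; split => //.
      by case/orP: H => /eqP ->; rewrite esym ?e1 ?e2.
    by rewrite cards2 x12.
  + rewrite (nW_leaf N2 uW xu) (negbTE y1) (negbTE y2) /=.
    have -> : [set w in [set x1; x2] | e y w] = [set x1; x2].
      apply/setP => w; rewrite !inE; apply/andP/idP => [[]//|H]; split => //.
      by case/orP: H => /eqP ->; rewrite esym ?e1 ?e2.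
    by rewrite cards2 x12.
- have r21 : rX [set x1; x2] x2 x1 by rewrite rX_sym.
  move=> a b; rewrite !inE => /orP[] /eqP -> /orP[] /eqP ->;
    by rewrite ?connect0 ?connect1.
Qed.
Lemma liftN_sub (W D : {set V}) x y X' :
  x \in W -> x \notin D -> nW W x = [set y] ->
  #|[set u in nW W y | u != x]| <= 1 ->
  xsub (W :\ x :\ y) D X' ->
  exists X, xsub W D X.
Proof.
move=> xW xD Nx H1 [sub ne H3 H4].
have /andP[yW exy] := nW_leafy Nx.
have Xs : forall a, a \in X' -> [/\ a \in W, a != x, a != y & a \notin D].
  move=> a /(subsetP sub); rewrite in_setD !in_setD1.
  by case/andP => -> /and3P[-> -> ->].
have xX' : x \notin X' by apply/negP => /Xs [_ /eqP []].
have yX' : y \notin X' by apply/negP => /Xs [_ _ /eqP []].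
have xy : x != y by apply: contraTneq exy => ->; rewrite eirr.
have notx : forall u, u \in W -> u != y -> e u x = false.
  move=> u uW uy; apply/negP => ux; move: uy; by rewrite (nW_leaf Nx uW) ?eqxx // esym.
case: (boolP [exists w in X', e y w]) => [/exists_inP [w0 w0X yw0]|nex]; last first.
  exists X'; split => //.
  - apply: (subset_trans sub); apply/subsetP => v; rewrite !inE.
    by case/andP => -> /and3P[_ _ ->].
  - move=> a u aX uW au.
    case: (eqVneq u x) => [Eu|ux].
      have [aW _ _ _] := Xs a aX.
      by move: au; rewrite Eu esym => /(nW_leaf Nx aW) E; move: yX'; rewrite -E aX.
    case: (eqVneq u y) => [Eu|uy].
      by move: nex; rewrite -Eu => /exists_inPn /(_ a aX); rewrite esym au.
    by apply: (H3 a) => //; rewrite !in_setD1 ux uy uW.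
have [w0W w0x w0y w0D] := Xs w0 w0X.
have cnt : [set w in x |: X' | e y w] = [set x; w0].
  apply/setP => w; rewrite !inE; apply/idP/idP.
    case/andP => /orP[->//|wX] yw; apply/orP; right.
    have /card_le1_eqP HH := H1; apply/eqP; apply: HH; rewrite !inE ?w0W ?yw0 ?w0x //.
    by have [-> -> _ _] := Xs w wX; rewrite yw.
  by case/orP => /eqP ->; rewrite ?eqxx ?w0X ?orbT ?yw0 // esym exy.
have w0x' : x != w0 by rewrite eq_sym.
exists (x |: X'); split.
- apply/subsetP => v; rewrite !inE => /orP[/eqP ->|vX]; first by rewrite xD xW.
  by have [-> _ _ ->] := Xs v vX.
- by apply/set0Pn; exists x; rewrite !inE eqxx.
- have yok : (y \notin x |: X') && (#|[set w in x |: X' | e y w]| == 2).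
    by rewrite !inE negb_or eq_sym xy yX' cnt cards2 w0x'.
  move=> a u /setU1P [->|aX] uW au.
    by rewrite (nW_leaf Nx uW au).
  case: (eqVneq u y) => [->//|uy].
  case: (eqVneq u x) => [Eu|ux].
    have [aW _ _ _] := Xs a aX.
    by move: au; rewrite Eu esym => /(nW_leaf Nx aW) E; move: yX'; rewrite -E aX.
  have uW' : u \in W :\ x :\ y by rewrite !in_setD1 ux uy uW.
  case/andP: (H3 a u aX uW' au) => uX c2.
  rewrite in_setU1 negb_or ux uX /=.
  have -> : [set w in x |: X' | e u w] = [set w in X' | e u w].
    apply/setP => w; rewrite !inE; case: (eqVneq w x) => [->|] //=.
    by rewrite notx // (negbTE xX').
  exact: c2.
- have sub1 : forall a b, connect (rX X') a b -> connect (rX (x |: X')) a b.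
    by apply: connect_sub; apply: rX_sub; apply: subsetUr.
  have rxw : rX (x |: X') x w0.
    rewrite /rX !inE eqxx w0X orbT w0x' /=; apply/existsP; exists y; by rewrite exy yw0.
  have cx : forall a, a \in x |: X' -> connect (rX (x |: X')) x a.
    move=> a /setU1P [->|aX]; first exact: connect0.
    by apply: connect_trans (connect1 rxw) (sub1 _ _ (H4 _ _ w0X aX)).
  move=> a b aX bX; apply: connect_trans (cx b bX).
  by rewrite (sym_connect_sym (@rX_sym _)) cx.
Qed.
Lemma match_fixed (W D : {set V}) p a : matching e D W p -> a \notin W -> p a = a.
Proof. by case=> _ edge _ aW; apply/eqP; apply: contraT => /edge /andP[aW' _]; rewrite aW' in aW. Qed.

Lemma C_main n : forall (W D : {set V}), #|W| <= n ->
  (exists p, matching e D W p) \/ (exists X, xsub W D X).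
Proof.
elim: n => [|n IH] W D Wn.
  left; exists id; split => //; first by move=> a; rewrite eqxx.
  by move=> v; move: Wn; rewrite leqn0 cards_eq0 => /eqP ->; rewrite inE.
case: (boolP ([set v in W | 1 < #|nW W v|] == set0)) => [/eqP NL0 | NLn].
  have deg1 : forall v, v \in W -> #|nW W v| <= 1.
    move=> v vW; rewrite leqNgt; apply/negP => H.
    have : v \in [set v in W | 1 < #|nW W v|] by rewrite inE vW H.
    by rewrite NL0 inE.
  case: (boolP [exists v in W :\: D, nW W v == set0]) => [/exists_inP [v vWD /eqP N0] | nex].
    right; exists [set v]; apply: single_sub => //; move: vWD; rewrite in_setD.
      by case/andP.
    by case/andP.
  left; pose p a := if a \in W then odflt a [pick u in nW W a] else a.
  have P1 : forall a u, a \in W -> u \in nW W a -> p a = u.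
    move=> a u aW uN; rewrite /p aW; case: pickP => [w wN|N0] /=.
      by have /card_le1_eqP := deg1 a aW; apply.
    by move: (N0 u); rewrite uN.
  exists p.
  have P0 : forall a, nW W a = set0 -> p a = a.
    move=> a N0; rewrite /p; case: (a \in W) => //; case: pickP => [w|] //=.
    by rewrite N0 inE.
  have P0' : forall a, a \notin W -> p a = a by move=> a /negbTE aW; rewrite /p aW.
  split.
  - move=> a; case: (boolP (a \in W)) => aW; last by rewrite !P0'.
    case: (set_0Vmem (nW W a)) => [N0|[u uN]]; first by rewrite !P0.
    rewrite (P1 a u aW uN); move: uN; rewrite nWE => /andP[uW au].
    by apply: P1 => //; rewrite nWE aW esym.
  - move=> a; case: (boolP (a \in W)) => aW; last by rewrite P0' ?eqxx.
    case: (set_0Vmem (nW W a)) => [N0|[u uN]]; first by rewrite P0 ?eqxx.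
    by rewrite (P1 a u aW uN); move: uN; rewrite nWE => /andP[_ ->].
  - move=> v vW vD.
    case: (set_0Vmem (nW W v)) => [N0|[u uN]].
      by move: nex => /exists_inPn /(_ v); rewrite in_setD vD vW N0 eqxx => /(_ isT).
    rewrite (P1 v u vW uN); move: uN; rewrite nWE => /andP[_ vu].
    by apply: contraTneq vu => ->; rewrite eirr.
have [y yNL Hy] := L0 esym eirr eacyc NLn.
move: (yNL); rewrite inE => /andP[yW degy].
pose Lv := [set u in nW W y | u \notin [set v in W | 1 < #|nW W v|]].
have leafL : forall u, u \in Lv -> nW W u = [set y].
  move=> u; rewrite !inE negb_and => /andP[/andP[uW yu] /orP[/negP//|]].
  rewrite -leqNgt => H1; apply/setP => w; rewrite inE; apply/idP/eqP => [wN|->].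
    by have /card_le1_eqP := H1; apply => //; rewrite nWE yW esym.
  by rewrite nWE yW esym.
have LvW : forall u, u \in Lv -> u \in W by move=> u; rewrite !inE => /andP[/andP[]].
have Lv0 : Lv != set0.
  apply/negP => /eqP L0'; move: degy; rewrite ltnNge; apply/negP; apply/negPn.
  apply: leq_trans Hy; apply: subset_leq_card; apply/subsetP => u uN.
  have : u \notin Lv by rewrite L0' inE.
  move: uN; rewrite !inE => /andP[uW yu]; by rewrite uW yu /= negbK andbT.
case: (boolP [exists x in Lv, x \in D]) => [/exists_inP [x xL xD] | nD].
  have Nx := leafL x xL; have xW := LvW x xL.
  have card' : #|W :\ x| <= n by move: Wn; rewrite (cardsD1 x) xW.
  case: (IH (W :\ x) (y |: D) card') => [[p' Hp']|[X' HX']].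
    by left; apply: (liftD_match xW xD Nx Hp').
  by right; exists X'; apply: (liftD_sub Nx HX').
have nDL : forall u, u \in Lv -> u \notin D by move: nD => /exists_inPn.
case: (boolP (1 < #|Lv|)) => [/card_gt1P [x1 [x2 [x1L x2L x12]]] | Lv1].
  right; exists [set x1; x2]; apply: (pair_sub (y := y)) => //;
    by rewrite ?LvW ?nDL ?leafL.
have [x xL] := set0Pn _ Lv0.
have Nx := leafL x xL; have xW := LvW x xL; have xD := nDL x xL.
have /andP[_ exy] := nW_leafy Nx.
have xy : x != y by apply: contraTneq exy => ->; rewrite eirr.
have card' : #|W :\ x :\ y| <= n.
  have yx : y != x by rewrite eq_sym.
  move: Wn; rewrite (cardsD1 x W) xW (cardsD1 y (W :\ x)) in_setD1 yx yW /=.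
  by rewrite !add1n ltnS => /ltnW.
case: (IH (W :\ x :\ y) D card') => [[p' Hp']|[X' HX']].
  left; exists (swp x y p'); apply: (swap_match Hp') => //.
  - by apply: (match_fixed Hp'); rewrite !in_setD1 eqxx andbF.
  - by apply: (match_fixed Hp'); rewrite !in_setD1 eqxx.
  - by apply/subsetP => v; rewrite !in_setD1 => /and3P[].
  - by move=> v vW vD vx vy; rewrite !in_setD1 vx vy vW vD.
right; apply: (liftN_sub xW xD Nx _ HX').
apply: leq_trans Hy; apply: subset_leq_card; apply/subsetP => u.
rewrite !inE => /andP[/andP[uW yu] ux]; rewrite yu andbT.
apply/negP => /negP uNL.
have uL : u \in Lv by rewrite !inE uW yu /=; move: uNL; rewrite uW.
have L1 : #|Lv| <= 1 by rewrite leqNgt.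
have /card_le1_eqP H := L1.
by move: ux; rewrite (H u x uL xL) eqxx.
Qed.
End Comb.

Section Build.
Variables (V : finType) (e : rel V) (D X : {set V}).
Hypotheses (esym : symmetric e) (eirr : irreflexive e) (eacyc : acyclic_graph e).
Hypothesis HX : xsub e setT D X.

Lemma XD x : x \in X -> x \notin D.
Proof. by case: HX => sub _ _ _ /(subsetP sub); rewrite in_setD => /andP[]. Qed.

Lemma Xnb x u : x \in X -> e x u -> (u \notin X) && (#|[set w in X | e u w]| == 2).
Proof. by case: HX => _ _ H3 _ xX xu; apply: (H3 x) => //; rewrite inE. Qed.

Lemma common_uniq a b u u' : e a u -> e u b -> e a u' -> e u' b -> a != b -> u = u'.
Proof.
move=> au ub au' u'b ab; apply/eqP; apply: contraT => uu'.
have := eacyc (p := [:: a; u; b; u']); rewrite /= !inE !negb_or.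
have nau : a != u by apply: contraTneq au => ->; rewrite eirr.
have nau' : a != u' by apply: contraTneq au' => ->; rewrite eirr.
have nub : u != b by apply: contraTneq ub => ->; rewrite eirr.
have nu'b : u' != b by apply: contraTneq u'b => ->; rewrite eirr.
rewrite nau ab nau' nub uu' eq_sym nu'b /= au ub esym u'b esym au' /=.
by move=> /(_ isT isT).
Qed.

Definition A := {x : V | x \in X}.
Definition rA : rel A := fun a b => rX e X (val a) (val b).
Definition mid (a b : V) := odflt a [pick u | e a u && e u b].

Lemma mid_spec a b : (exists u, e a u && e u b) -> e a (mid a b) && e (mid a b) b.
Proof.
case=> u H; rewrite /mid; case: pickP => [w -> //|N]; by move: (N u); rewrite H.
Qed.

Lemma mid_eq a b u : a != b -> e a u -> e u b -> mid a b = u.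
Proof.
move=> ab au ub; have /andP[h1 h2] : e a (mid a b) && e (mid a b) b.
  by apply: mid_spec; exists u; rewrite au ub.
by apply: (common_uniq h1 h2 au ub ab).
Qed.

Lemma rA_sym : symmetric rA.
Proof. by move=> a b; rewrite /rA rX_sym. Qed.

Lemma rA_irr : irreflexive rA.
Proof. by move=> a; rewrite /rA /rX eqxx /= !andbF. Qed.

Lemma rA_mid a b : rA a b -> [/\ val a != val b, e (val a) (mid (val a) (val b)) & e (mid (val a) (val b)) (val b)].
Proof.
rewrite /rA /rX => /and4P[_ _ ab /existsP ex]; split => //;
  have /andP[] := mid_spec ex => //.
Qed.

Definition hA (z : A + sub_edge rA) : V :=
  match z with inl a => val a | inr p => mid (val (val p).1) (val (val p).2) end.

Lemma p_r (p : sub_edge rA) : rA (val p).1 (val p).2.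
Proof. by case/andP: (valP p). Qed.

Lemma midp (p : sub_edge rA) :
  [/\ val (val p).1 != val (val p).2, e (val (val p).1) (hA (inr p)) & e (hA (inr p)) (val (val p).2)].
Proof. exact: rA_mid (p_r p). Qed.

Lemma inr_notX p : hA (inr p) \notin X.
Proof. by case: (midp p) => _ h1 _; case/andP: (Xnb (valP (val p).1) h1). Qed.

Lemma ends (q : sub_edge rA) a : q \in inc rA a ->
  ((val q).1 = a /\ (val q).2 = oth q a) \/ ((val q).2 = a /\ (val q).1 = oth q a).
Proof.
rewrite inE /oth => /orP[/eqP E|/eqP E].
  by left; rewrite -E eqxx.
right; split => //; case: ifP => [/eqP E'|] //.
by have := p_r q; rewrite E' -E rA_irr.
Qed.

Lemma inc_adj q a : q \in inc rA a -> e (val a) (hA (inr q)) && e (val (oth q a)) (hA (inr q)).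
Proof.
case: (midp q) => _ h1 h2; case/ends => [[E1 E2]|[E1 E2]]; rewrite -E2 -E1 h1 /=.
  by rewrite esym.
by rewrite esym h2.
Qed.
Lemma two_nb m c w1 w2 : c \in X -> e c m -> w1 \in X -> w2 \in X ->
  e m w1 -> e m w2 -> w1 != c -> w2 != c -> w1 = w2.
Proof.
move=> cX cm w1X w2X m1 m2 n1 n2.
have /andP[_ /eqP c2] := Xnb cX cm.
have cS : c \in [set w in X | e m w] by rewrite inE cX /= esym cm.
have : #|[set w in X | e m w] :\ c| <= 1.
  by move: c2; rewrite (cardsD1 c) cS add1n => [[->]].
move/card_le1_eqP; apply; by rewrite !inE ?n1 ?n2 ?w1X ?w2X ?m1 ?m2.
Qed.

Lemma hA_inj : injective hA.
Proof.
have vneq : forall a b : A, a != b -> val a != val b.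
  by move=> a b; apply: contra => /eqP /val_inj ->.
case=> [a|p] [b|q] /=.
- by move/val_inj ->.
- by move=> E; have := inr_notX q; rewrite /= -E (valP a).
- by move=> E; have := inr_notX p; rewrite /= E (valP b).
move=> E0; have E : hA (inr p) = hA (inr q) := E0; clear E0.
set a := (val p).1.
have pa : p \in inc rA a by rewrite inE eqxx.
have aX : val a \in X := valP a.
have am : e (val a) (hA (inr p)) by case/andP: (inc_adj pa).
have qa : q \in inc rA a.
  rewrite inE; apply: contraT => /norP [n1 n2].
  have q12 : val (val q).1 = val (val q).2.
    case: (midp q) => _ h1 h2.
    apply: (two_nb aX am (valP _) (valP _)).
    - by rewrite E esym.
    - by rewrite E.
    - by apply: vneq; rewrite eq_sym.
    - by apply: vneq; rewrite eq_sym.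
  by have := p_r q; rewrite (val_inj q12) rA_irr.
congr inr; apply: (edge_uniq rA_irr pa qa); apply: val_inj.
apply: (two_nb aX am (valP _) (valP _)).
- by rewrite esym; case/andP: (inc_adj pa).
- by rewrite E esym; case/andP: (inc_adj qa).
- by apply: vneq; apply: oth_neq rA_sym rA_irr _ _ pa.
- by apply: vneq; apply: oth_neq rA_sym rA_irr _ _ qa.
Qed.
Lemma hA_adj x y : sdiv_rel x y -> e (hA x) (hA y).
Proof.
case: x => [a|p]; case: y => [b|q] //= H.
  have Hq : q \in inc rA a by rewrite inE.
  by case/andP: (inc_adj Hq).
have Hp : p \in inc rA b by rewrite inE.
by rewrite esym; case/andP: (inc_adj Hp).
Qed.

Lemma hA_deg a : deg e (hA (inl a)) = deg (@sdiv_rel A rA) (inl a).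
Proof.
rewrite /deg.
suff -> : [set u | e (hA (inl a)) u] = hA @: [set z | @sdiv_rel A rA (inl a) z].
  by rewrite card_imset //; exact: hA_inj.
apply/setP => u; rewrite inE /=.
apply/idP/imsetP => [au|[z zin ->]]; last first.
  by apply: (hA_adj (x := inl a)); rewrite inE in zin.
have aX : val a \in X := valP a.
have /andP[uX /eqP c2] := Xnb aX au.
have aS : val a \in [set w in X | e u w] by rewrite inE aX /= esym.
have : 0 < #|[set w in X | e u w] :\ val a|.
  by move: c2; rewrite (cardsD1 (val a)) aS add1n => [[->]].
case/card_gt0P => b'; rewrite !inE => /andP[b'a /andP[b'X ub']].
pose b : A := Sub b' b'X.
have rab : rA a b.
  rewrite /rA /rX aX b'X /= eq_sym b'a /=; apply/existsP; exists u; by rewrite au ub'.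
have [q qin oq] := edge_ex rA_sym rA_irr rab.
exists (inr q); first by rewrite inE /=; move: qin; rewrite inE.
have /andP[h1 h2] := inc_adj qin.
rewrite oq in h2.
have ab : val a != val b by rewrite /= eq_sym.
symmetry; apply: (common_uniq h1 _ au ub' ab); by rewrite esym.
Qed.
Lemma HL (RA : {set A}) : RA != set0 ->
  exists2 a, a \in RA & #|[set b in RA | rA a b]| <= 1.
Proof.
move=> R0.
case: (boolP [exists a in RA, #|[set b in RA | rA a b]| <= 1]) => [/exists_inP[a aR H]|/exists_inPn H].
  by exists a.
exfalso.
have H2 : forall a, a \in RA -> 1 < #|[set b in RA | rA a b]|.
  by move=> a /H; rewrite -ltnNge.
pose Re := [set v | [exists a in RA, val a == v] ||
  [exists a in RA, [exists b in RA, rA a b && e (val a) v && e v (val b)]]].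
have Re0 : Re != set0.
  case/set0Pn: R0 => a aR; apply/set0Pn; exists (val a); rewrite inE.
  by apply/orP; left; apply/exists_inP; exists a.
have [v vR Hv] := L0 esym eirr eacyc Re0.
move: Hv; apply/negP; rewrite -ltnNge; apply/card_gt1P.
move: vR; rewrite inE => /orP[/exists_inP [a aR /eqP <-]|/exists_inP [a aR /exists_inP [b bR /andP[/andP[rab av] vb]]]].
  have := H2 a aR; case/card_gt1P => b1 [b2 [b1in b2in b12]].
  move: b1in b2in; rewrite !inE => /andP[b1R r1] /andP[b2R r2].
  have [n1 e1 f1] := rA_mid r1; have [n2 e2 f2] := rA_mid r2.
  exists (mid (val a) (val b1)), (mid (val a) (val b2)); split.
  - rewrite !inE e1 andbT; apply/orP; right; apply/exists_inP; exists a => //.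
    by apply/exists_inP; exists b1 => //; rewrite r1 e1 f1.
  - rewrite !inE e2 andbT; apply/orP; right; apply/exists_inP; exists a => //.
    by apply/exists_inP; exists b2 => //; rewrite r2 e2 f2.
  - apply/eqP => Em; move: b12; apply/negP; rewrite negbK; apply/eqP; apply: val_inj.
    apply: (two_nb (valP a) e1 (valP _) (valP _) f1); first by rewrite Em.
    + by rewrite eq_sym.
    + by rewrite eq_sym.
have [nab _ _] := rA_mid rab.
exists (val a), (val b); split => //.
- rewrite !inE esym av andbT; apply/orP; left; apply/exists_inP; by exists a.
- rewrite !inE vb andbT; apply/orP; left; apply/exists_inP; by exists b.
Qed.

Lemma conn_lift (s : seq V) (ax : A) : path (rX e X) (val ax) s ->
  forall b : A, val b = last (val ax) s -> connect rA ax b.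
Proof.
elim: s ax => [|y s IH] ax /=.
  by move=> _ b /val_inj ->; apply: connect0.
case/andP => rxy P b Eb.
have yX : y \in X by case/and4P: rxy.
pose ay : A := Sub y yX.
have ray : rA ax ay by [].
apply: connect_trans (connect1 ray) _.
by apply: IH.
Qed.

Lemma rA_tree : is_tree rA.
Proof.
case: HX => _ ne _ H4.
split.
- by split; [exact: rA_sym | exact: rA_irr].
- by case/set0Pn: ne => x xX; apply/card_gt0P; exists (Sub x xX : A).
- move=> a b; have := H4 (val a) (val b) (valP a) (valP b).
  by case/connectP => s P L; apply: (conn_lift P).
- by apply: L0_acyclic; [exact: rA_sym | exact: HL].
Qed.

Lemma build : exists (A : finType) (r : rel A) (h : A + sub_edge r -> V),
    S_substructure e h /\ [set h (inl a) | a : A] :&: D = set0.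
Proof.
exists A, rA, hA; split.
  split; [exact: rA_tree | exact: hA_inj | exact: hA_adj | exact: hA_deg].
apply/setP => v; rewrite !inE; apply/andP => [[/imsetP [a _ ->] vD]].
by move: (XD (valP a)); rewrite /= vD.
Qed.
End Build.



Theorem theorem4p5 (V : finType) (e : rel V) (D : {set V}) :
  is_tree e ->
  staller_wins_MBD e D <->
  exists (A : finType) (r : rel A) (h : A + sub_edge r -> V),
    S_substructure e h /\ [set h (inl a) | a : A] :&: D = set0.
Proof.
case=> [[esym eirr] _ _ eacyc]; split.
- move=> Hw.
  have cT : #|[set: V]| <= #|V| by rewrite cardsT.
  case: (C_main esym eirr eacyc D cT) => [[p Hp]|[X HX]].
    by move: (G1 Hp); rewrite Hw.
  exact: (build esym eirr eacyc HX).
- case=> A [r [h [[[[rsym rirr] A0 _ racyc] hinj hadj hdeg] Hdis]]].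
  apply: (G2 rsym rirr racyc hinj hadj hdeg _ A0).
  move=> a; apply/negP => aD.
  have : h (inl a) \in [set h (inl a) | a : A] :&: D by rewrite inE imset_f ?inE.
  by rewrite Hdis inE.
Qed.
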